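(* Let $p$ be a design (probability distribution of a random treatment vector $\mathbf Z\in\{0,1\}^n$) such that with probability one at least one unit is treated and at least one unit is in control. Suppose each unit $i$ has potential outcomes $Y_i(z,e)$, $z\in\{0,1\}$, $e\in\{0,1,\dots,K_i-1\}$, of the form $Y_i(z,e)=A_i(z)+B_i(e)+zC_i(e)$ with $B_i(0)=C_i(0)=0$. Let $\mathrm{DTE}=\frac1n\sum_{i=1}^n\big(Y_i(1,0)-Y_i(0,0)\big)$ and let $$\hat\beta_{naive}=\frac{\sum_i Y_i^{obs}Z_i}{\sum_i Z_i}-\frac{\sum_i Y_i^{obs}(1-Z_i)}{\sum_i(1-Z_i)}.$$ Then $\mathrm{DTE}=\frac1n\sum_{i=1}^n(A_i(1)-A_i(0))$ and $$\mathbb E[\hat\beta_{naive}]-\mathrm{DTE}=\sum_i\Big(A_i(1)\big(\alpha_i(1)-\tfrac1n\big)-A_i(0)\big(\alpha_i(0)-\tfrac1n\big)\Big)+\sum_i\sum_{e\neq0}B_i(e)\big(\alpha_i(1,e)-\alpha_i(0,e)\big)+\sum_i\sum_{e\ne0}C_i(e)\,\alpha_i(1,e),$$ where $\alpha_i(z,e)=\mathbb E\!\left[\frac{I(Z_i=z,E_i=e)}{\sum_{j}I(Z_j=z)}\right]$ and $\alpha_i(z)=\sum_e\alpha_i(z,e)=\mathbb E\!\left[\frac{I(Z_i=z)}{\sum_j I(Z_j=z)}\right]$.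
   Context: Each unit $i$ has an interference neighborhood $N_i$ and an exposure function $f$ mapping $\{0,1\}^{N_i}$ onto $\{0,\dots,K_i-1\}$; the random exposure is $E_i=f(\mathbf Z_{N_i})$. Exposure level $0$ means ''not exposed''. The potential outcomes $Y_i(z,e)$ are fixed numbers; the observed outcome is $Y_i^{obs}=Y_i(Z_i,E_i)$ and all expectations are over the design. *)

(* Defs.v *)
From HB Require Import structures.
From mathcomp Require Import all_boot all_order all_algebra.
Set Implicit Arguments. Unset Strict Implicit. Unset Printing Implicit Defensive.
Import Order.TTheory GRing.Theory Num.Theory.
Local Open Scope ring_scope.

Notation assign n := {ffun 'I_n -> bool}.

Definition is_design (R : numFieldType) (n : nat) (p : assign n -> R) : Prop :=
  (forall z, 0 <= p z) /\ \sum_(z : assign n) p z = 1.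

Definition Expect (R : numFieldType) (n : nat) (p : assign n -> R)
  (X : assign n -> R) : R := \sum_(z : assign n) p z * X z.

Definition ind (R : numFieldType) (b : bool) : R := (b : nat)%:R.

Definition nwith (R : numFieldType) (n : nat) (z : assign n) (b : bool) : R :=
  \sum_(j < n) ind R (z j == b).

Definition alpha (R : numFieldType) (n : nat) (K : 'I_n -> nat)
  (p : assign n -> R) (E : forall i : 'I_n, assign n -> 'I_(K i).+1)
  (i : 'I_n) (b : bool) (e : 'I_(K i).+1) : R :=
  Expect p (fun z => ind R ((z i == b) && (E i z == e)) / nwith R z b).

Definition alpha1 (R : numFieldType) (n : nat) (p : assign n -> R)
  (i : 'I_n) (b : bool) : R :=
  Expect p (fun z => ind R (z i == b) / nwith R z b).

Definition Yobs (R : numFieldType) (n : nat) (K : 'I_n -> nat)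
  (Y : forall i : 'I_n, bool -> 'I_(K i).+1 -> R)
  (E : forall i : 'I_n, assign n -> 'I_(K i).+1) (i : 'I_n) (z : assign n) : R :=
  Y i (z i) (E i z).

Definition beta_naive (R : numFieldType) (n : nat) (K : 'I_n -> nat)
  (Y : forall i : 'I_n, bool -> 'I_(K i).+1 -> R)
  (E : forall i : 'I_n, assign n -> 'I_(K i).+1) (z : assign n) : R :=
  (\sum_(i < n) Yobs Y E i z * ind R (z i)) / (\sum_(i < n) ind R (z i))
  - (\sum_(i < n) Yobs Y E i z * ind R (~~ z i)) / (\sum_(i < n) ind R (~~ z i)).

Definition DTE (R : numFieldType) (n : nat) (K : 'I_n -> nat)
  (Y : forall i : 'I_n, bool -> 'I_(K i).+1 -> R) : R :=
  n%:R^-1 * \sum_(i < n) (Y i true ord0 - Y i false ord0).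

(* Main.v *)
Require Import Defs.
From HB Require Import structures.
From mathcomp Require Import all_boot all_order all_algebra.
From mathcomp Require Import ring.
Import Order.TTheory GRing.Theory Num.Theory.
Local Open Scope ring_scope.

Arguments ind : simpl never.
Lemma indT (R : realFieldType) : ind R true = 1. Proof. by []. Qed.
Lemma indF (R : realFieldType) : ind R false = 0. Proof. by []. Qed.

Section H.
Variables (R : realFieldType) (n : nat) (p : assign n -> R).

Lemma ExpD (X Y : assign n -> R) :
  Expect p (fun z => X z + Y z) = Expect p X + Expect p Y.
Proof. by rewrite /Expect -big_split; apply: eq_bigr => z _; rewrite mulrDr. Qed.

Lemma ExpB (X Y : assign n -> R) :
  Expect p (fun z => X z - Y z) = Expect p X - Expect p Y.
Proof. by rewrite /Expect -sumrB; apply: eq_bigr => z _; rewrite mulrBr. Qed.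

Lemma ExpN (X : assign n -> R) :
  Expect p (fun z => - X z) = - Expect p X.
Proof. by rewrite /Expect -sumrN; apply: eq_bigr => z _; rewrite mulrN. Qed.

Lemma ExpZ c (X : assign n -> R) :
  Expect p (fun z => c * X z) = c * Expect p X.
Proof. by rewrite /Expect mulr_sumr; apply: eq_bigr => z _; rewrite mulrCA. Qed.

Lemma ExpS (I : Type) (r : seq I) (P : pred I) (F : I -> assign n -> R) :
  Expect p (fun z => \sum_(i <- r | P i) F i z) = \sum_(i <- r | P i) Expect p (F i).
Proof.
rewrite /Expect; under eq_bigr do rewrite mulr_sumr.
exact: exchange_big.
Qed.

Lemma Expext (X Y : assign n -> R) : (forall z, X z = Y z) -> Expect p X = Expect p Y.
Proof. by move=> h; rewrite /Expect; apply: eq_bigr => z _; rewrite h. Qed.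
End H.

Lemma sum_pick (R : realFieldType) k (F : 'I_k.+1 -> R) (x : 'I_k.+1) :
  F ord0 = 0 -> \sum_(e < k.+1 | e != ord0) F e * ind R (x == e) = F x.
Proof.
move=> F0.
have -> : \sum_(e < k.+1 | e != ord0) F e * ind R (x == e)
        = \sum_(e < k.+1) F e * ind R (x == e).
  rewrite [RHS](bigD1 ord0) //= F0 mul0r add0r.
  by [].
rewrite (bigD1 x) //= eqxx /ind /= mulr1 big1 ?addr0 // => e /negbTE.
by rewrite eq_sym => ->; rewrite mulr0.
Qed.

Theorem proposition10 (R : realFieldType) (n : nat) (p : assign n -> R)
  (N : 'I_n -> {set 'I_n}) (K : 'I_n -> nat)
  (E : forall i : 'I_n, assign n -> 'I_(K i).+1)
  (Y : forall i : 'I_n, bool -> 'I_(K i).+1 -> R)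
  (A : 'I_n -> bool -> R)
  (B C : forall i : 'I_n, 'I_(K i).+1 -> R) :
  is_design p ->
  (forall z, 0 < p z -> [exists j, z j] && [exists j, ~~ z j]) ->
  (* exposure E_i = f(Z_{N_i}) depends only on the neighborhood N_i *)
  (forall i (z z' : assign n), (forall j, j \in N i -> z j = z' j) -> E i z = E i z') ->
  (* the exposure mapping is onto {0, ..., K_i - 1} (here K_i = (K i).+1) *)
  (forall i (e : 'I_(K i).+1), exists z, E i z = e) ->
  (forall i (z : bool) e, Y i z e = A i z + B i e + ind R z * C i e) ->
  (forall i, B i ord0 = 0) ->
  (forall i, C i ord0 = 0) ->
  DTE Y = n%:R^-1 * \sum_(i < n) (A i true - A i false)
  /\
  Expect p (beta_naive Y E) - DTE Y =
    \sum_(i < n) (A i true * (alpha1 p i true - n%:R^-1)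
                  - A i false * (alpha1 p i false - n%:R^-1))
    + \sum_(i < n) \sum_(e < (K i).+1 | e != ord0)
         B i e * (alpha p E true e - alpha p E false e)
    + \sum_(i < n) \sum_(e < (K i).+1 | e != ord0) C i e * alpha p E true e.
Proof.
move=> _ _ _ _ HY HB HC.
have Hdte : DTE Y = n%:R^-1 * \sum_(i < n) (A i true - A i false).
  rewrite /DTE; congr (_ * _); apply: eq_bigr => i _.
  by rewrite !HY HB HC /ind /= !mulr0 !addr0.
split => //.
pose g i (z : assign n) := A i true * (ind R (z i == true) / nwith R z true)
   - A i false * (ind R (z i == false) / nwith R z false)
   + \sum_(e < (K i).+1 | e != ord0) B i e *
        (ind R ((z i == true) && (E i z == e)) / nwith R z true
         - ind R ((z i == false) && (E i z == e)) / nwith R z false)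
   + \sum_(e < (K i).+1 | e != ord0) C i e *
        (ind R ((z i == true) && (E i z == e)) / nwith R z true).
have Hpt : forall z, beta_naive Y E z = \sum_(i < n) g i z.
  move=> z; rewrite /beta_naive.
  have -> : \sum_(i < n) ind R (z i) = nwith R z true.
    by apply: eq_bigr => i _; rewrite eqb_id.
  have -> : \sum_(i < n) ind R (~~ z i) = nwith R z false.
    by apply: eq_bigr => i _; case: (z i).
  rewrite !mulr_suml -sumrB; apply: eq_bigr => i _.
  rewrite /g /Yobs.
  set nt := nwith R z true; set nf := nwith R z false.
  case: (z i); rewrite /= !HY ?indT ?indF.
  - rewrite !mul0r !mulr0 !subr0 mulr1 !mul1r.
    under eq_bigr do rewrite subr0 mulrCA mulrC.
    under [X in _ = _ + _ + X]eq_bigr do rewrite mulrCA mulrC.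
    have h := @sum_pick _ _ (fun e => B i e / nt) (E i z); rewrite /= HB mul0r in h; rewrite h //; clear h.
    have h := @sum_pick _ _ (fun e => C i e / nt) (E i z); rewrite /= HC mul0r in h; rewrite h //; clear h.
    by rewrite mul0r subr0 !mulrDl.
  - rewrite !mul0r !mulr0 !sub0r !mulr1 !mul1r !mul0r !addr0.
    under eq_bigr do rewrite sub0r mulrN mulrCA mulrC.
    under [X in _ = _ + X]eq_bigr do rewrite mulr0.
    rewrite big1_eq addr0 sumrN.
    have h := @sum_pick _ _ (fun e => B i e / nf) (E i z); rewrite /= HB mul0r in h; rewrite h //; clear h.
    by rewrite sub0r mulrDl opprD.
rewrite (@Expext _ _ p _ _ Hpt) ExpS Hdte.
have -> : \sum_(i < n) Expect p (g i) =
   \sum_(i < n) (A i true * alpha1 p i true - A i false * alpha1 p i false)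
   + \sum_(i < n) \sum_(e < (K i).+1 | e != ord0)
         B i e * (alpha p E true e - alpha p E false e)
    + \sum_(i < n) \sum_(e < (K i).+1 | e != ord0) C i e * alpha p E true e.
  rewrite -!big_split; apply: eq_bigr => i _ /=.
  rewrite /g !ExpD ExpN !ExpZ !ExpS; congr (_ + _ + _).
  apply: eq_bigr => e _; rewrite ExpZ ExpB //.
  apply: eq_bigr => e _; rewrite ExpZ //.
have -> : \sum_(i < n) (A i true * (alpha1 p i true - n%:R^-1)
                  - A i false * (alpha1 p i false - n%:R^-1)) =
  \sum_(i < n) (A i true * alpha1 p i true - A i false * alpha1 p i false)
  - n%:R^-1 * \sum_(i < n) (A i true - A i false).
  rewrite mulr_sumr -sumrB; apply: eq_bigr => i _; ring.
set S1 := \sum_(i < n) (_ - _).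
set S2 := \sum_(i < n) _.
set S3 := \sum_(i < n) _.
ring.
Qed.
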